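(* Let $A\in SL_2\mathcal{V}$. (1) If $A\in\mathcal{P}$ and $A\kappa=\kappa x$ for some $\kappa\in S\mathbb{H}$ and $x\in\mathbb{H}$, then $x=1$. (2) $A\in\mathcal{P}$ if and only if $A$ is not the identity and there exists $\kappa\in S\mathbb{H}$ with $A\kappa=\kappa$.
   Context: For $q=a+bi+cj+dk\in\mathbb{H}$, $q^*=a+bi+cj-dk$, $\bar q=a-bi-cj-dk$. $\mathcal{V}=\mathrm{span}_\mathbb{R}\{1,i,j\}$. $S\mathbb{H}=\{(\xi,\eta)\in\mathbb{H}^2\setminus\{(0,0)\}:\xi\bar\eta\in\mathcal{V}\}$, with right multiplication $(\xi,\eta)x=(\xi x,\eta x)$; matrices act on columns by multiplication. $SL_2\mathcal{V}$ is the group of quaternionic matrices $\begin{pmatrix}a&b\\c&d\end{pmatrix}$ with $ab^*,cd^*,c^*a,d^*b,ba^*,dc^*,a^*c,b^*d\in\mathcal{V}$ and $ad^*-bc^*=da^*-cb^*=d^*a-b^*c=a^*d-c^*b=1$. $\mathcal{P}$ is the set of parabolic translations: $A\in SL_2\mathcal{V}$ with $A\neq1$ and $(A-1)^2=0$ (equivalently, $A$ conjugate in $SL_2\mathcal{V}$ to $\begin{pmatrix}1&1\\0&1\end{pmatrix}$). *)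

(* Defs.v *)
From HB Require Import structures.
From mathcomp Require Import all_boot all_order all_algebra.
From mathcomp Require Import reals.
Set Implicit Arguments. Unset Strict Implicit. Unset Printing Implicit Defensive.
Import Order.TTheory GRing.Theory Num.Theory.
Local Open Scope ring_scope.

Section Quat.
Variable R : realType.

(* q = a + b i + c j + d k *)
Record quat := Quat { q0 : R; q1 : R; q2 : R; q3 : R }.

Definition qzero : quat := Quat 0 0 0 0.
Definition qone : quat := Quat 1 0 0 0.
Definition qadd (p q : quat) : quat :=
  Quat (q0 p + q0 q) (q1 p + q1 q) (q2 p + q2 q) (q3 p + q3 q).
Definition qopp (p : quat) : quat := Quat (- q0 p) (- q1 p) (- q2 p) (- q3 p).
Definition qsub (p q : quat) : quat := qadd p (qopp q).
(* Hamilton product: i^2 = j^2 = k^2 = ijk = -1 *)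
Definition qmul (p q : quat) : quat :=
  Quat (q0 p * q0 q - q1 p * q1 q - q2 p * q2 q - q3 p * q3 q)
       (q0 p * q1 q + q1 p * q0 q + q2 p * q3 q - q3 p * q2 q)
       (q0 p * q2 q - q1 p * q3 q + q2 p * q0 q + q3 p * q1 q)
       (q0 p * q3 q + q1 p * q2 q - q2 p * q1 q + q3 p * q0 q).
Definition qbar (p : quat) : quat := Quat (q0 p) (- q1 p) (- q2 p) (- q3 p).
Definition qstar (p : quat) : quat := Quat (q0 p) (q1 p) (q2 p) (- q3 p).

(* membership in V = span_R {1, i, j} *)
Definition inV (p : quat) : Prop := q3 p = 0.

Definition SH (k : quat * quat) : Prop :=
  k <> (qzero, qzero) /\ inV (qmul k.1 (qbar k.2)).

Definition rmulp (k : quat * quat) (x : quat) : quat * quat :=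
  (qmul k.1 x, qmul k.2 x).

Record qmat := QMat { ma : quat; mb : quat; mc : quat; md : quat }.

Definition qmat1 : qmat := QMat qone qzero qzero qone.
Definition qmat0 : qmat := QMat qzero qzero qzero qzero.
Definition qmsub (A B : qmat) : qmat :=
  QMat (qsub (ma A) (ma B)) (qsub (mb A) (mb B))
       (qsub (mc A) (mc B)) (qsub (md A) (md B)).
Definition qmmul (A B : qmat) : qmat :=
  QMat (qadd (qmul (ma A) (ma B)) (qmul (mb A) (mc B)))
       (qadd (qmul (ma A) (mb B)) (qmul (mb A) (md B)))
       (qadd (qmul (mc A) (ma B)) (qmul (md A) (mc B)))
       (qadd (qmul (mc A) (mb B)) (qmul (md A) (md B))).

Definition qmact (A : qmat) (k : quat * quat) : quat * quat :=
  (qadd (qmul (ma A) k.1) (qmul (mb A) k.2),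
   qadd (qmul (mc A) k.1) (qmul (md A) k.2)).

Definition SL2V (A : qmat) : Prop :=
  let a := ma A in let b := mb A in let c := mc A in let d := md A in
  [/\ inV (qmul a (qstar b)), inV (qmul c (qstar d)),
      inV (qmul (qstar c) a), inV (qmul (qstar d) b) &
   [/\ inV (qmul b (qstar a)), inV (qmul d (qstar c)),
       inV (qmul (qstar a) c), inV (qmul (qstar b) d) &
   [/\ qsub (qmul a (qstar d)) (qmul b (qstar c)) = qone,
       qsub (qmul d (qstar a)) (qmul c (qstar b)) = qone,
       qsub (qmul (qstar d) a) (qmul (qstar b) c) = qone &
       qsub (qmul (qstar a) d) (qmul (qstar c) b) = qone]]].

Definition parabolic (A : qmat) : Prop :=
  SL2V A /\ A <> qmat1 /\
  qmmul (qmsub A qmat1) (qmsub A qmat1) = qmat0.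

End Quat.

(* Main.v *)
Require Import Defs.
From HB Require Import structures.
From mathcomp Require Import all_boot all_order all_algebra.
From mathcomp Require Import reals.
From mathcomp Require Import ring lra.
Set Implicit Arguments. Unset Strict Implicit. Unset Printing Implicit Defensive.
Import Order.TTheory GRing.Theory Num.Theory.
Local Open Scope ring_scope.

Section Helpers.
Variable R : realType.
Implicit Types p q w x y : quat R.

Lemma quatP p q : q0 p = q0 q -> q1 p = q1 q -> q2 p = q2 q -> q3 p = q3 q -> p = q.
Proof. by case: p; case: q => /= ? ? ? ? ? ? ? ? -> -> -> ->. Qed.

Ltac qring := apply: quatP; simpl; ring.

Definition nrm q : R := q0 q ^+ 2 + q1 q ^+ 2 + q2 q ^+ 2 + q3 q ^+ 2.
Definition qscale (r : R) q := Quat (r * q0 q) (r * q1 q) (r * q2 q) (r * q3 q).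

Lemma nrm_ge0 q : 0 <= nrm q.
Proof. rewrite /nrm; have := sqr_ge0 (q0 q); have := sqr_ge0 (q1 q);
  have := sqr_ge0 (q2 q); have := sqr_ge0 (q3 q); lra. Qed.

Lemma sq0 (r : R) : r ^+ 2 = 0 -> r = 0.
Proof. by move/eqP; rewrite sqrf_eq0 => /eqP. Qed.

Lemma nrm0 q : nrm q = 0 -> q = qzero R.
Proof.
rewrite /nrm => h; have := sqr_ge0 (q0 q); have := sqr_ge0 (q1 q);
  have := sqr_ge0 (q2 q); have := sqr_ge0 (q3 q) => h3 h2 h1 h0.
apply: quatP => /=; apply: sq0; lra.
Qed.

Lemma rcancel x y : nrm y != 0 -> qmul x y = qzero R -> x = qzero R.
Proof.
move=> ny h.
have e : qmul (qmul x y) (qbar y) = qscale (nrm y) x by rewrite /nrm; qring.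
have e2 : qscale (nrm y) x = qzero R by rewrite -e h; qring.
apply: quatP; [move: (congr1 (@q0 R) e2)|move: (congr1 (@q1 R) e2)
  |move: (congr1 (@q2 R) e2)|move: (congr1 (@q3 R) e2)] => /= /eqP;
  rewrite mulf_eq0 (negbTE ny) /= => /eqP -> //.
Qed.

Lemma lcancel x y : nrm x != 0 -> qmul x y = qzero R -> y = qzero R.
Proof.
move=> nx h.
have e : qmul (qbar x) (qmul x y) = qscale (nrm x) y by rewrite /nrm; qring.
have e2 : qscale (nrm x) y = qzero R by rewrite -e h; qring.
apply: quatP; [move: (congr1 (@q0 R) e2)|move: (congr1 (@q1 R) e2)
  |move: (congr1 (@q2 R) e2)|move: (congr1 (@q3 R) e2)] => /= /eqP;
  rewrite mulf_eq0 (negbTE nx) /= => /eqP -> //.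
Qed.

Lemma sqq0 y : qmul y y = qzero R -> y = qzero R.
Proof.
move=> h; apply: nrm0; apply: sq0.
have e : nrm (qmul y y) = nrm y ^+ 2 by rewrite /nrm /=; ring.
by rewrite -e h /nrm /=; ring.
Qed.

Lemma starV w : inV w -> qsub w (qstar w) = qzero R.
Proof. case: w => w0 w1 w2 w3; rewrite /inV /= => ->; qring. Qed.

Lemma starV' w : inV w -> qsub (qstar w) w = qzero R.
Proof. case: w => w0 w1 w2 w3; rewrite /inV /= => ->; qring. Qed.

Lemma inV_conj w q : inV w -> inV (qmul (qstar q) (qmul w q)).
Proof. case: w => w0 w1 w2 w3; rewrite /inV /= => ->; ring. Qed.

Lemma inV_bar c p : inV (qmul (qstar c) p) -> inV (qmul p (qbar c)).
Proof.
move=> h.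
have e : nrm c * q3 (qmul p (qbar c)) =
  q3 (qmul (qstar (qbar c)) (qmul (qmul (qstar c) p) (qbar c))) by rewrite /nrm /=; ring.
have := inV_conj (qbar c) h; rewrite /inV -e => /eqP; rewrite mulf_eq0 => /orP[/eqP nc|/eqP //].
by rewrite (nrm0 nc) /=; ring.
Qed.

End Helpers.

Ltac qring := apply: quatP; simpl; ring.

Theorem lemma3p26 (R : realType) (A : qmat R) :
  SL2V A ->
  (parabolic A ->
     forall (k : quat R * quat R) (x : quat R),
       SH k -> qmact A k = rmulp k x -> x = qone R) /\
  (parabolic A <->
     (A <> qmat1 R /\ exists k : quat R * quat R, SH k /\ qmact A k = k)).
Proof.
case: A => a b c d hsl.
have hsl' := hsl.
case: hsl' => /= v1 v2 v3 v4 [v5 v6 v7 v8 [e1 e2 e3 e4]].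
split.
-
  case=> _ [_ N2] [xi eta] x [hk0 hV] hk.
  have n11 := congr1 (@ma R) N2; have n12 := congr1 (@mb R) N2;
  have n21 := congr1 (@mc R) N2; have n22 := congr1 (@md R) N2;
  cbn [ma mb mc md qmmul qmsub qmat1 qmat0] in n11, n12, n21, n22.
  have h1 := congr1 fst hk; have h2 := congr1 snd hk;
  cbn [fst snd qmact rmulp] in h1, h2.
  set y := qsub x (qone R).
  have E1 : qsub (qmul xi y) (qadd (qmul (qsub a (qone R)) xi) (qmul (qsub b (qzero R)) eta)) = qzero R.
    transitivity (qsub (qmul xi x) (qadd (qmul a xi) (qmul b eta))); first by rewrite /y; qring.
    by rewrite h1; qring.
  have E2 : qsub (qmul eta y) (qadd (qmul (qsub c (qzero R)) xi) (qmul (qsub d (qone R)) eta)) = qzero R.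
    transitivity (qsub (qmul eta x) (qadd (qmul c xi) (qmul d eta))); first by rewrite /y; qring.
    by rewrite h2; qring.
  set na := qsub a (qone R) in E1 n11 n12 n21 n22.
  set nb := qsub b (qzero R) in E1 n11 n12 n21 n22.
  set nc := qsub c (qzero R) in E2 n11 n12 n21 n22.
  set nd := qsub d (qone R) in E2 n11 n12 n21 n22.
  set F1 := qsub (qmul xi y) _ in E1.
  set F2 := qsub (qmul eta y) _ in E2.
  have X1 : qmul xi (qmul y y) = qadd (qadd (qmul (qadd (qmul na na) (qmul nb nc)) xi)
        (qmul (qadd (qmul na nb) (qmul nb nd)) eta))
        (qadd (qmul na F1) (qadd (qmul nb F2) (qmul F1 y))) by rewrite /F1 /F2; qring.
  have X2 : qmul eta (qmul y y) = qadd (qadd (qmul (qadd (qmul nc na) (qmul nd nc)) xi)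
        (qmul (qadd (qmul nc nb) (qmul nd nd)) eta))
        (qadd (qmul nc F1) (qadd (qmul nd F2) (qmul F2 y))) by rewrite /F1 /F2; qring.
  rewrite n11 n12 E1 E2 in X1; rewrite n21 n22 E1 E2 in X2.
  have Y : qmul y y = qzero R.
    have [nx|nx] := eqVneq (nrm xi) 0.
    + have [ne|ne] := eqVneq (nrm eta) 0.
        by exfalso; apply: hk0; rewrite (nrm0 nx) (nrm0 ne).
      apply: (lcancel ne); rewrite X2; qring.
    + apply: (lcancel nx); rewrite X1; qring.
  have := sqq0 Y; rewrite /y => Y0.
  apply: quatP; [move: (congr1 (@q0 R) Y0)|move: (congr1 (@q1 R) Y0)
    |move: (congr1 (@q2 R) Y0)|move: (congr1 (@q3 R) Y0)] => /= ?; lra.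
- split.
  + case=> _ [hne N2].
    have n11 := congr1 (@ma R) N2; have n12 := congr1 (@mb R) N2;
    have n21 := congr1 (@mc R) N2; have n22 := congr1 (@md R) N2;
    cbn [ma mb mc md qmmul qmsub qmat1 qmat0] in n11, n12, n21, n22.
    split => //.
    have C : qsub c (qstar c) = qzero R.
      set w := qmul (qstar a) c.
      have X : qsub c (qstar c) = qsub (qsub (qadd (qmul (qsub w (qstar w)) (qsub (Quat 2 0 0 0) a))
          (qmul (qstar a) (qadd (qmul (qsub c (qzero R)) (qsub a (qone R))) (qmul (qsub d (qone R)) (qsub c (qzero R))))))
          (qmul (qsub (qsub (qmul (qstar a) d) (qmul (qstar c) b)) (qone R)) c))
          (qmul (qstar c) (qadd (qmul (qsub a (qone R)) (qsub a (qone R))) (qmul (qsub b (qzero R)) (qsub c (qzero R)))))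
        by rewrite /w; qring.
      by rewrite X starV // n21 n11 e4; qring.
    have c3 : q3 c = 0 by move: (congr1 (@q3 R) C) => /=; lra.
    have [h0|h0] := eqVneq (nrm (qsub a (qone R)) + nrm c) 0.
    * have := nrm_ge0 (qsub a (qone R)); have := nrm_ge0 c => g1 g2.
      have ha : nrm (qsub a (qone R)) = 0 by lra.
      have hc : nrm c = 0 by lra.
      move/nrm0: ha => ha; move/nrm0: hc => hc.
      have ha' : a = qone R.
        apply: quatP; [move: (congr1 (@q0 R) ha)|move: (congr1 (@q1 R) ha)
          |move: (congr1 (@q2 R) ha)|move: (congr1 (@q3 R) ha)] => /= ?; lra.
      subst a c.
      exists (qone R, qzero R); split; last by rewrite /qmact /=; congr pair; qring.
      split; last by rewrite /inV /=; ring.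
      move=> /(congr1 (fun k => q0 k.1)) /= /eqP; by rewrite oner_eq0.
    * exists (qsub a (qone R), c); split.
        split.
          move=> hh; have ha := congr1 fst hh; have hc := congr1 snd hh; cbn [fst snd] in ha, hc; move: h0; rewrite ha hc /nrm /= => /eqP; apply; ring.
        apply: inV_bar.
        have -> : qmul (qstar c) (qsub a (qone R)) = qsub (qmul (qstar c) a) (qstar c) by qring.
        rewrite /inV; have -> : q3 (qsub (qmul (qstar c) a) (qstar c)) = q3 (qmul (qstar c) a) + q3 c by rewrite /=; ring.
        by rewrite v3 c3 addr0.
      rewrite /qmact /=; congr pair.
        transitivity (qadd (qsub a (qone R)) (qadd (qmul (qsub a (qone R)) (qsub a (qone R))) (qmul (qsub b (qzero R)) (qsub c (qzero R))))); first by qring.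
        by rewrite n11; qring.
      transitivity (qadd c (qadd (qmul (qsub c (qzero R)) (qsub a (qone R))) (qmul (qsub d (qone R)) (qsub c (qzero R))))); first by qring.
      by rewrite n21; qring.
  + case=> hne [[xi eta] [[hk0 hV] hk]].
    split => //; split => //.
    have h1 := congr1 fst hk; have h2 := congr1 snd hk;
    cbn [fst snd qmact rmulp] in h1, h2.
    rewrite /qmmul /qmsub /qmat1 /qmat0 /=.
    have [ne|ne] := eqVneq (nrm eta) 0.
    * move/nrm0: ne => ne; subst eta.
      have nx : nrm xi != 0.
        apply/eqP => /nrm0 nx; by apply: hk0; rewrite nx.
      have ha : qsub a (qone R) = qzero R.
        apply: (rcancel nx).
        transitivity (qsub (qadd (qmul a xi) (qmul b (qzero R))) xi); first by qring.
        by rewrite h1; qring.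
      have hc : c = qzero R.
        apply: (rcancel nx).
        transitivity (qadd (qmul c xi) (qmul d (qzero R))); first by qring.
        by rewrite h2.
      have ha' : a = qone R.
        apply: quatP; [move: (congr1 (@q0 R) ha)|move: (congr1 (@q1 R) ha)
          |move: (congr1 (@q2 R) ha)|move: (congr1 (@q3 R) ha)] => /= ?; lra.
      subst a c.
      have hd : d = qone R.
        apply: quatP; [move: (congr1 (@q0 R) e3)|move: (congr1 (@q1 R) e3)
          |move: (congr1 (@q2 R) e3)|move: (congr1 (@q3 R) e3)] => /= ?; lra.
      subst d.
      congr QMat; qring.
    * pose p := qscale (nrm eta)^-1 (qmul xi (qbar eta)).
      have hp : inV p.
        rewrite /inV /p; move: hV; rewrite /inV /= => ->; by rewrite mulr0.
      have e : qmul (qmul xi (qbar eta)) eta = qscale (nrm eta) xi by rewrite /nrm; qring.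
      have hxi : qmul p eta = xi.
        transitivity (qscale (nrm eta)^-1 (qmul (qmul xi (qbar eta)) eta)); first by rewrite /p; qring.
        rewrite e; apply: quatP => /=; by rewrite mulrA mulVf // mul1r.
      clearbody p; subst xi.
      have hb0 : qsub (qadd (qmul a p) b) p = qzero R.
        apply: (rcancel ne).
        transitivity (qsub (qadd (qmul a (qmul p eta)) (qmul b eta)) (qmul p eta)); first by qring.
        by rewrite h1; qring.
      have hd0 : qsub (qadd (qmul c p) d) (qone R) = qzero R.
        apply: (rcancel ne).
        transitivity (qsub (qadd (qmul c (qmul p eta)) (qmul d eta)) eta); first by qring.
        by rewrite h2; qring.
      have hb : b = qsub p (qmul a p).
        apply: quatP; [move: (congr1 (@q0 R) hb0)|move: (congr1 (@q1 R) hb0)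
          |move: (congr1 (@q2 R) hb0)|move: (congr1 (@q3 R) hb0)] => /= ?; lra.
      have hd : d = qsub (qone R) (qmul c p).
        apply: quatP; [move: (congr1 (@q0 R) hd0)|move: (congr1 (@q1 R) hd0)
          |move: (congr1 (@q2 R) hd0)|move: (congr1 (@q3 R) hd0)] => /= ?; lra.
      subst b d.
      have ha0 : qsub a (qadd (qone R) (qmul p c)) = qzero R.
        set w := qmul (qstar a) c.
        have X : qsub a (qadd (qone R) (qmul p c)) =
          qadd (qadd (qsub (qsub (qmul (qstar (qsub (qone R) (qmul c p))) a)
                                 (qmul (qstar (qsub p (qmul a p))) c)) (qone R))
                     (qmul (qstar p) (qsub (qstar w) w)))
               (qmul (qsub (qstar p) p) c) by rewrite /w; qring.
        by rewrite X e3 starV' // starV' //; qring.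
      have ha : a = qadd (qone R) (qmul p c).
        apply: quatP; [move: (congr1 (@q0 R) ha0)|move: (congr1 (@q1 R) ha0)
          |move: (congr1 (@q2 R) ha0)|move: (congr1 (@q3 R) ha0)] => /= ?; lra.
      subst a.
      congr QMat; qring.
Qed.
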